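(* Let $k\ge1$, and let $\phi^1,\dots,\phi^k\in[0,1]^d$ be fixed feature attribution vectors (for a fixed input). Let $\mathcal{Q}(\phi)=\mathbb{E}_{\gamma_1,\gamma_2}\big[\lVert\gamma_1\phi-\gamma_2\rVert_2^2\big]$ be a generalized $L2$ metric given by random variables $\gamma_1\in\mathbb{R}^{g\times d}$, $\gamma_2\in\mathbb{R}^g$, and suppose that for all realizations $\lVert\gamma_1\rVert_1\le c_1$ and $\lVert\gamma_1\phi^i-\gamma_2\rVert_2^2\le c_2$ for all $i=1,\dots,k$. Let $\Omega=\{\omega\in\mathbb{R}^k:\omega_i\ge0,\ \sum_{i=1}^k\omega_i=1\}$ and $\phi^{\omega}=\sum_{i=1}^k\omega_i\phi^i$. Let $(\gamma_1^{(j)},\gamma_2^{(j)})$, $j=1,\dots,m$, be i.i.d. samples with the distribution of $(\gamma_1,\gamma_2)$, and let $$\hat\omega\in\arg\min_{\omega\in\Omega}\frac1m\sum_{j=1}^m\lVert\gamma_1^{(j)}\phi^{\omega}-\gamma_2^{(j)}\rVert_2^2.$$ Then there exists a constant $C=C(c_1,c_2)>0$ depending on $c_1$ and $c_2$ such that for every $\delta\in(0,1)$, with probability at least $1-\delta$ over the samples, $$\mathcal{Q}(\phi^{\hat\omega})-\min_{\omega\in\Omega}\mathcal{Q}(\phi^{\omega})\le C\sqrt{\frac{4\log(16k/\delta)}{m}}.$$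
   Context: Feature attributions are normalized, i.e. take values in $[0,1]^d$. A generalized $L2$ metric is a map $\mathcal{Q}:\mathbb{R}^d\to\mathbb{R}$ of the form $\mathcal{Q}(\phi)=\mathbb{E}[\lVert\gamma_1\phi-\gamma_2\rVert_2^2]$ for random $\gamma_1\in\mathbb{R}^{g\times d}$, $\gamma_2\in\mathbb{R}^g$. Here $\lVert\gamma_1\rVert_1$ denotes the sum of the absolute values of the entries of the matrix $\gamma_1$ (so that every entry of $\gamma_1\phi$ is bounded by $\lVert\gamma_1\rVert_1\lVert\phi\rVert_\infty$), and $\log$ is the natural logarithm. *)

(* Defs.v *)
From HB Require Import structures.
From mathcomp Require Import all_boot all_order all_algebra.
From mathcomp Require Import all_classical all_reals all_analysis.
Set Implicit Arguments. Unset Strict Implicit. Unset Printing Implicit Defensive.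
Import Order.TTheory GRing.Theory Num.Theory.
Local Open Scope classical_set_scope.
Local Open Scope ring_scope.

(* A realization (gamma1, gamma2) packed as a real tuple of length g*d+g
   (all entries of gamma1, then all entries of gamma2); n.-tuple R carries
   the product (Borel) sigma-algebra of mathcomp-analysis. *)
Definition pack (R : realType) (g d : nat) (A : 'M[R]_(g, d)) (b : 'cV[R]_g)
  : (g * d + g).-tuple R :=
  [tuple (row_mx (mxvec A) b^T) ord0 i | i < g * d + g].

Definition mx_l1 (R : realType) (g d : nat) (A : 'M[R]_(g, d)) : R :=
  \sum_(i < g) \sum_(j < d) `|A i j|.

Definition sqnorm2 (R : realType) (g : nat) (v : 'cV[R]_g) : R :=
  \sum_(i < g) (v i ord0) ^+ 2.

Definition simplex (R : realType) (k : nat) : set ('I_k -> R) :=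
  [set w | (forall i, 0 <= w i) /\ \sum_(i < k) w i = 1].

Definition phi_comb (R : realType) (k d : nat) (phi : 'I_k -> 'cV[R]_d)
  (w : 'I_k -> R) : 'cV[R]_d := \sum_(i < k) w i *: phi i.

Definition genL2 (disp : measure_display) (T : measurableType disp)
  (R : realType) (P : probability T R) (g d : nat)
  (G1 : T -> 'M[R]_(g, d)) (G2 : T -> 'cV[R]_g) (phi : 'cV[R]_d) : R :=
  fine (\int[P]_x (sqnorm2 (G1 x *m phi - G2 x))%:E)%E.

Definition emp_risk (R : realType) (m g d : nat)
  (S1 : 'I_m -> 'M[R]_(g, d)) (S2 : 'I_m -> 'cV[R]_g) (phi : 'cV[R]_d) : R :=
  m%:R^-1 * \sum_(j < m) sqnorm2 (S1 j *m phi - S2 j).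

Definition same_law (disp dV : measure_display) (T : measurableType disp)
  (V : measurableType dV) (R : realType) (P : probability T R)
  (f h : T -> V) : Prop :=
  forall B : set V, measurable B -> P (f @^-1` B) = P (h @^-1` B).

(* mutual independence of the random elements Y_0, ..., Y_(m-1):
   product rule for events A_j in the sigma-algebra generated by Y_j
   (taking A_j = setT covers all finite subfamilies) *)
Definition mutually_independent (disp dV : measure_display)
  (T : measurableType disp) (V : measurableType dV) (R : realType)
  (P : probability T R) (m : nat) (Y : 'I_m -> T -> V) : Prop :=
  forall A : 'I_m -> set T,
    (forall j, preimage_set_system setT (Y j) measurable (A j)) ->
    P (\bigcap_j A j) = (\prod_(j < m) P (A j))%E.

(* Main.v *)
Require Import Defs.
From HB Require Import structures.
From mathcomp Require Import all_boot all_order all_algebra.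
From mathcomp Require Import all_classical all_reals all_analysis.
From mathcomp Require Import ring lra.
Import Order.TTheory GRing.Theory Num.Theory.
Local Open Scope classical_set_scope.
Local Open Scope ring_scope.

Section H1.
Context (d : measure_display) (T : measurableType d) (R : realType) (P : probability T R).

Lemma bnd_int (f : T -> R) (M : R) : measurable_fun setT f ->
  (forall x, `|f x| <= M) -> P.-integrable setT (EFin \o f).
Proof.
move=> mf hM; apply: measurable_bounded_integrable => //.
  by apply: fin_num_fun_lty; exact: fin_num_measure.
rewrite /bounded_near; near=> y => x _ /=; apply: le_trans (hM x) _; near: y.
apply: nbhs_pinfty_ge; exact: num_real.
Unshelve. all: end_near.
Qed.

Lemma intZ (k : R) (f : T -> R) : P.-integrable setT (EFin \o f) ->
  P.-integrable setT (EFin \o (fun x => k * f x)).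
Proof.
move=> hf; have -> : EFin \o (fun x => k * f x) = (fun x => k%:E * (EFin \o f) x)%E.
  by apply/funext => x.
exact: integrableZl.
Qed.

Lemma intD (f g : T -> R) : P.-integrable setT (EFin \o f) ->
  P.-integrable setT (EFin \o g) ->
  P.-integrable setT (EFin \o (fun x => f x + g x)).
Proof.
move=> hf hg; have -> : EFin \o (fun x => f x + g x) = ((EFin \o f) \+ (EFin \o g))%E.
  by apply/funext => x.
exact: integrableD.
Qed.

Lemma Rint_lin (I : Type) (s : seq I) (c : I -> R) (F : I -> T -> R) :
  (forall i, P.-integrable setT (EFin \o F i)) ->
  \int[P]_x (\sum_(i <- s) c i * F i x) = \sum_(i <- s) c i * \int[P]_x F i x.
Proof.
move=> hF; elim: s => [|a s IH].
  under eq_Rintegral do rewrite big_nil.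
  by rewrite big_nil Rintegral_cst // mul0r.
under eq_Rintegral do rewrite big_cons.
rewrite big_cons RintegralD //.
- by rewrite RintegralZl // IH.
- exact: intZ.
- have -> : (EFin \o (fun x => \sum_(i <- s) c i * F i x)) =
     (fun x => \sum_(i <- s) (c i)%:E * (EFin \o F i) x)%E.
    by apply/funext => x /=; rewrite -sumEFin.
  by apply: integrable_sum => // i _; exact: integrableZl.
Qed.

Lemma Rint_indic (A : set T) : measurable A -> \int[P]_x (\1_A x : R) = fine (P A).
Proof. by move=> mA; rewrite /Rintegral integral_indic // setIT. Qed.

Lemma Pfin (A : set T) : measurable A -> P A = (fine (P A))%:E.
Proof. by move=> mA; rewrite fineK // fin_num_measure. Qed.

Lemma Pfin_ge0 (A : set T) : 0 <= fine (P A).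
Proof. by rewrite fine_ge0. Qed.

Lemma Pfin_le1 (A : set T) : measurable A -> fine (P A) <= 1.
Proof. by move=> mA; rewrite -lee_fin -Pfin //; exact: probability_le1. Qed.

Lemma ind_int (A : set T) : measurable A -> P.-integrable setT (EFin \o (\1_A : T -> R)).
Proof.
move=> mA; apply: (@bnd_int _ 1); first exact: measurable_realfun.measurable_indic.
by move=> x; rewrite /indic; case: (x \in A) => /=; rewrite ?normr1 ?normr0.
Qed.

Lemma union_bound (I : eqType) (s : seq I) (A : I -> set T) (D : set T) :
  measurable D -> (forall i, measurable (A i)) ->
  (forall x, D x -> exists2 i, i \in s & A i x) ->
  fine (P D) <= \sum_(i <- s) fine (P (A i)).
Proof.
move=> mD mA hD.
rewrite -Rint_indic //.
have -> : \sum_(i <- s) fine (P (A i)) = \sum_(i <- s) 1 * \int[P]_x (\1_(A i) x : R).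
  by apply: eq_bigr => i _; rewrite mul1r Rint_indic.
rewrite -Rint_lin; last by move=> i; exact: ind_int.
apply: le_Rintegral => //.
- exact: ind_int.
- have -> : (EFin \o (fun x => \sum_(i <- s) 1 * (\1_(A i) x : R))) =
     (fun x => \sum_(i <- s) (1%:E * (EFin \o (\1_(A i) : T -> R)) x))%E.
    by apply/funext => x /=; rewrite -sumEFin.
  by apply: integrable_sum => // i _; apply: integrableZl => //; exact: ind_int.
move=> x _; rewrite /indic; case: (boolP (x \in D)) => /= xD.
  have [i is_ Ai] := hD x (set_mem xD).
  rewrite (big_rem _ is_) /= mem_set // mul1r lerDl.
  by apply: sumr_ge0 => j _; rewrite mul1r; case: (x \in A j).
by apply: sumr_ge0 => j _; rewrite mul1r; case: (x \in A j).
Qed.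

Lemma weighted_bound (I : finType) (c : I -> R) (A : I -> set T) (D : set T) :
  measurable D -> (forall i, measurable (A i)) -> (forall i, 0 <= c i) ->
  (forall x, D x -> 1 <= \sum_i c i * (\1_(A i) x : R)) ->
  fine (P D) <= \sum_i c i * fine (P (A i)).
Proof.
move=> mD mA c0 hD.
rewrite -Rint_indic //.
have -> : \sum_i c i * fine (P (A i)) = \sum_i c i * \int[P]_x (\1_(A i) x : R).
  by apply: eq_bigr => i _; rewrite Rint_indic.
rewrite -Rint_lin; last by move=> i; exact: ind_int.
apply: le_Rintegral => //.
- exact: ind_int.
- have -> : (EFin \o (fun x => \sum_i c i * (\1_(A i) x : R))) =
     (fun x => \sum_(i <- index_enum I) ((c i)%:E * (EFin \o (\1_(A i) : T -> R)) x))%E.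
    by apply/funext => x /=; rewrite -sumEFin.
  by apply: integrable_sum => // i _; apply: integrableZl => //; exact: ind_int.
move=> x _; rewrite /indic; case: (boolP (x \in D)) => /= xD.
  exact: hD (set_mem xD).
by apply: sumr_ge0 => j _; apply: mulr_ge0 => //; case: (x \in A j).
Qed.

Lemma Rint_const (r : R) : \int[P]_x r = r.
Proof.
have P1 : P setT = 1%E := probability_setT P.
rewrite Rintegral_cst // [fine _](_ : _ = 1) ?mulr1 //.
exact: (congr1 fine P1).
Qed.

Lemma int_const (r : R) : P.-integrable setT (EFin \o (fun _ : T => r)).
Proof. by apply: (@bnd_int _ `|r|) => //; exact: measurable_cst. Qed.

End H1.

Lemma expR_le2 (R : realType) (y : R) : y <= 1/2 -> expR y <= 1 + y + 2 * y ^+ 2.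
Proof.
move=> hy.
have h1 : 1 - y <= expR (- y) by have := expR_ge1Dx (- y); lra.
have hp : 0 < 1 - y by lra.
rewrite -[expR y]invrK -expRN.
have hq : 0 < 1 + y + 2 * y ^+ 2 by nra.
rewrite -[X in _ <= X]invrK lef_pV2 ?posrE ?invr_gt0 ?expR_gt0 //.
apply: le_trans h1; rewrite -(ler_pM2l hq) divff ?gt_eqF //. nra.
Qed.

Lemma expR_sum (R : realType) (I : Type) (s : seq I) (F : I -> R) :
  expR (\sum_(i <- s) F i) = \prod_(i <- s) expR (F i).
Proof. by apply: (big_morph _ (@expRD R)); rewrite expR0. Qed.

Section Conc.
Context (d : measure_display) (T : measurableType d) (R : realType)
  (P : probability T R) (dV : measure_display) (V : measurableType dV)
  (m : nat) (Y : 'I_m -> T -> V) (Y0 : T -> V) (h : V -> R) (B : R).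
Hypotheses (mY : forall j, measurable_fun setT (Y j))
  (mY0 : measurable_fun setT Y0) (mh : measurable_fun setT h)
  (hB : forall j x, `|h (Y j x)| <= B) (hB0 : forall x, `|h (Y0 x)| <= B)
  (B0 : 0 < B) (m0 : (0 < m)%N)
  (law : forall j, same_law P (Y j) Y0) (ind : mutually_independent P Y).

Variable t : R.
Hypothesis (t0 : 0 < t) (tB : t <= 2 * B).

Ltac hyps := have ? := tB; have ? := B0; have ? := t0.

Let eta := t / 2.
Let eta0 : 0 < eta. Proof. by rewrite /eta divr_gt0. Qed.
Let L := (Num.truncn (2 * B / eta)).+1.
Let lo (v : nat) : R := - B + v%:R * eta.
Let bin (v : nat) : set R := [set` `[lo v, lo v + eta[ ].
Let z (v : nat) : R := lo v + eta.
Let bn (y : R) : 'I_L := inord (Num.truncn ((y + B) / eta)).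

Let bn_val y : `|y| <= B -> (bn y : nat) = Num.truncn ((y + B) / eta).
Proof.
move=> hy; rewrite /bn inordK // ltnS; apply: le_truncn.
rewrite ler_pM2r ?invr_gt0 //; move: hy; rewrite ler_norml => /andP[? ?]; lra.
Qed.

Let bin_mem y : `|y| <= B -> bin (bn y) y.
Proof.
move=> hy; rewrite /bin /= in_itv /= bn_val // /lo.
have q0 : 0 <= (y + B) / eta.
  apply: divr_ge0; last exact: ltW.
  by move: hy; rewrite ler_norml => /andP[? ?]; hyps; lra.
have := truncn_itv q0 => /andP[h1 h2].
set n := Num.truncn _ in h1 h2 *.
rewrite ler_pdivlMr // in h1; rewrite ltr_pdivrMr // in h2.
rewrite mulrSr in h2.
apply/andP; split; nra.
Qed.

Let bin_uniq y (v : 'I_L) : bin v y -> v = bn y.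
Proof.
rewrite /bin /= in_itv /= /lo => /andP[h1 h2].
apply: val_inj => /=; rewrite /bn inordK.
  apply/esym/truncn_def; apply/andP; split.
    by rewrite ler_pdivlMr //; lra.
  by rewrite ltr_pdivrMr // mulrSr; lra.
suff -> : Num.truncn ((y + B) / eta) = v by [].
apply/truncn_def; apply/andP; split.
  by rewrite ler_pdivlMr //; lra.
by rewrite ltr_pdivrMr // mulrSr; lra.
Qed.

Let z_bn y : `|y| <= B -> y < z (bn y) <= y + eta.
Proof.
move=> /bin_mem; rewrite /bin /z /= in_itv /= => /andP[h1 h2]; apply/andP; split; lra.
Qed.

Let mbin v : measurable (bin v).
Proof. exact: measurable_itv. Qed.

Let Hset v : set V := setT `&` h @^-1` bin v.
Let mHset v : measurable (Hset v).
Proof. exact: mh. Qed.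

Let Ab j v : set T := setT `&` Y j @^-1` Hset v.
Let Ab0 v : set T := setT `&` Y0 @^-1` Hset v.
Let mAb j v : measurable (Ab j v). Proof. exact: mY. Qed.
Let mAb0 v : measurable (Ab0 v). Proof. exact: mY0. Qed.

Let p v := fine (P (Ab0 v)).

Let PAb j v : P (Ab j v) = (p v)%:E.
Proof.
rewrite /Ab setTI (law j (Hset v) (mHset v)) -(setTI (Y0 @^-1` _)); apply: Pfin; exact: mAb0.
Qed.

Let C (f : {ffun 'I_m -> 'I_L}) : set T := \bigcap_j Ab j (f j).

Let mC f : measurable (C f).
Proof.
apply: fin_bigcap_measurable; last by move=> j _; exact: mAb.
exact: finite_finset.
Qed.

Let PC f : fine (P (C f)) = \prod_j p (f j).
Proof.
have := ind (fun j => Ab j (f j)).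
rewrite /C => ->; last first.
  move=> j; exists (Hset (f j)) => //; exact: mHset.
rewrite (eq_bigr (fun j => (p (f j))%:E)); last by move=> j _; exact: PAb.
by rewrite prodEFin.
Qed.

Let s := t / (32 * B ^+ 2).
Let s0 : 0 < s.
Proof. by rewrite /s divr_gt0 // mulr_gt0 // exprn_gt0. Qed.
Let sB : s * (2 * B) <= 1 / 2.
Proof.
have Bn0 : B != 0 by rewrite gt_eqF.
have -> : s * (2 * B) = t / (16 * B) by rewrite /s expr2; field.
rewrite ler_pdivrMr ?mulr_gt0 //; hyps; lra.
Qed.

Let F x := m%:R^-1 * \sum_j h (Y j x).
Let mu := \int[P]_x h (Y0 x).
Let e v := expR (s * z v).

Let mhY0 : measurable_fun setT (fun x => h (Y0 x)).
Proof. exact: measurableT_comp mh mY0. Qed.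

Let mF : measurable_fun setT F.
Proof.
apply: measurable_realfun.measurable_funM; first exact: measurable_cst.
apply: measurable_sum => j; exact: measurableT_comp mh (mY j).
Qed.

Let step3 : \sum_(v < L) e v * p v <= 1 + s * (mu + eta) + 8 * s ^+ 2 * B ^+ 2.
Proof.
have -> : \sum_(v < L) e v * p v = \int[P]_x (\sum_(v < L) e v * (\1_(Ab0 v) x : R)).
  rewrite Rint_lin; last by move=> v; exact: ind_int.
  by apply: eq_bigr => v _; rewrite Rint_indic.
pose K := 1 + s * eta + 8 * s ^+ 2 * B ^+ 2.
have hint : P.-integrable setT (EFin \o (fun x => h (Y0 x))).
  exact: (@bnd_int _ _ _ P _ B mhY0 hB0).
have -> : 1 + s * (mu + eta) + 8 * s ^+ 2 * B ^+ 2 = \int[P]_x (K + s * h (Y0 x)).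
  rewrite RintegralD //; last first.
  - exact: intZ.
  - apply: (@bnd_int _ _ _ _ _ `|K|); first exact: measurable_cst.
    by move=> x.
  have P1 : P setT = 1%E := probability_setT P.
  rewrite Rintegral_cst // [fine _](_ : _ = 1) ?mulr1; last exact: (congr1 fine P1).
  rewrite RintegralZl //.
  rewrite /K /mu; ring.
apply: le_Rintegral => //.
- rewrite [X in _.-integrable _ X](_ : _ = (fun x => \sum_(v <- index_enum 'I_L)
     ((e v)%:E * (EFin \o (\1_(Ab0 v) : T -> R)) x))%E); last first.
    by apply/funext => x /=; rewrite -sumEFin.
  by apply: integrable_sum => // i _; apply: integrableZl => //; exact: ind_int.
- apply: intD; last exact: intZ.
  apply: (@bnd_int _ _ _ _ _ `|K|); first exact: measurable_cst.
  by move=> x.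
move=> x _; hyps; have ? := eta0; have ? := s0.
set y := h (Y0 x).
have hy : `|y| <= B by exact: hB0.
rewrite (bigD1 (bn y)) //= big1 ?addr0; last first.
  move=> v hv; rewrite /indic; case: (boolP (x \in Ab0 v)) => /=; last by rewrite mulr0.
  move=> /set_mem [_ [_ hb]]; move: hv; by rewrite (bin_uniq y v hb) eqxx.
rewrite /indic mem_set; last first.
  by split => //; split => //; exact: bin_mem.
rewrite mulr1 /e.
have /andP[z1 z2] := z_bn y hy.
move: hy; rewrite ler_norml => /andP[hy1 hy2].
have eB : eta <= B by rewrite /eta; lra.
have zlo : - (2 * B) <= z (bn y) by lra.
have zhi : z (bn y) <= 2 * B by lra.
have sz : s * z (bn y) <= 1 / 2.
  apply: le_trans sB; rewrite ler_pM2l //.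
apply: le_trans (@expR_le2 _ _ sz) _.
rewrite /K.
have : (s * z (bn y)) ^+ 2 <= s ^+ 2 * (4 * B ^+ 2).
  rewrite exprMn ler_pM2l ?exprn_gt0 //; rewrite !expr2; nra.
have : s * z (bn y) <= s * (y + eta) by rewrite ler_pM2l.
move=> ? ?; nra.
Qed.

Lemma tail_bound : fine (P (setT `&` F @^-1` `]mu + t, +oo[)) <=
  expR (- (m%:R * t ^+ 2 / (128 * B ^+ 2))).
Proof.
hyps; have ? := eta0; have ? := s0.
set D := setT `&` F @^-1` `]mu + t, +oo[.
have mD : measurable D by apply: mF => //; exact: measurable_itv.
have m0' : (0 : R) < m%:R by rewrite ltr0n.
pose c (f : {ffun 'I_m -> 'I_L}) :=
  expR (- (s * (m%:R * (mu + t))) + \sum_j s * z (f j)).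
have H1 : fine (P D) <= \sum_f c f * fine (P (C f)).
  apply: weighted_bound => // [f|x [_ Dx]]; first exact: expR_ge0.
  move: Dx; rewrite /= in_itv /= andbT => Dx.
  pose f0 := [ffun j => bn (h (Y j x))].
  rewrite (bigD1 f0) //= /indic mem_set; last first.
    move=> j _; rewrite ffunE; split => //; split => //; exact: bin_mem.
  rewrite mulr1; apply: le_trans (_ : c f0 <= _); last first.
    rewrite lerDl; apply: sumr_ge0 => f _; apply: mulr_ge0; first exact: expR_ge0.
    by case: (x \in C f).
  apply: le_trans (expR_ge1Dx _); rewrite lerDl.
  rewrite -mulr_sumr -mulrN -mulrDr; apply: mulr_ge0; first exact: ltW.
  have hs : \sum_j h (Y j x) = m%:R * F x.
    by rewrite /F mulrA divff ?mul1r // gt_eqF.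
  have hz : \sum_j h (Y j x) <= \sum_j z (f0 j).
    apply: ler_sum => j _; rewrite ffunE.
    by have /andP[/ltW ? _] := z_bn _ (hB j x).
  have : m%:R * (mu + t) < m%:R * F x by rewrite ltr_pM2l.
  lra.
have H2 : \sum_f c f * fine (P (C f)) =
    expR (- (s * (m%:R * (mu + t)))) * (\sum_(v < L) e v * p v) ^+ m.
  under eq_bigr do rewrite PC /c expRD expR_sum -mulrA -big_split.
  rewrite -mulr_sumr; congr (_ * _).
  rewrite -(bigA_distr_bigA (fun (j : 'I_m) (v : 'I_L) => e v * p v)) /=.
  by rewrite prodr_const card_ord.
set u := s * (mu + eta) + 8 * s ^+ 2 * B ^+ 2.
have sum0 : 0 <= \sum_(v < L) e v * p v.
  by apply: sumr_ge0 => v _; apply: mulr_ge0; [exact: expR_ge0 | exact: fine_ge0].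
have H3 : (\sum_(v < L) e v * p v) ^+ m <= expR (m%:R * u).
  have s3 : \sum_(v < L) e v * p v <= 1 + u by rewrite /u addrA; exact: step3.
  rewrite expRM_natl; apply: le_trans (_ : (1 + u) ^+ m <= _).
    by apply: lerXn2r => //; rewrite nnegrE //; exact: le_trans sum0 s3.
  apply: lerXn2r; rewrite ?nnegrE ?expR_ge0 //; last exact: expR_ge1Dx.
  exact: le_trans sum0 s3.
apply: le_trans H1 _; rewrite H2.
apply: le_trans (_ : expR (- (s * (m%:R * (mu + t)))) * expR (m%:R * u) <= _).
  by rewrite ler_pM2l ?expR_gt0.
rewrite -expRD le_eqVlt; apply/orP; left; apply/eqP; congr expR.
have Bn0 : B != 0 by rewrite gt_eqF.
rewrite /u /s /eta; by field.
Qed.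

End Conc.
Set Implicit Arguments. Unset Strict Implicit. Unset Printing Implicit Defensive.

Definition uA (R : realType) (g d : nat) (y : (g * d + g).-tuple R) : 'M[R]_(g, d) :=
  \matrix_(i, l) tnth y (lshift g (mxvec_index i l)).
Definition ub (R : realType) (g d : nat) (y : (g * d + g).-tuple R) : 'cV[R]_g :=
  \col_i tnth y (rshift (g * d) i).

Lemma uA_pack (R : realType) (g d : nat) (A : 'M[R]_(g, d)) b : uA (pack A b) = A.
Proof. by apply/matrixP => i l; rewrite !mxE tnth_mktuple row_mxEl mxvecE. Qed.

Lemma ub_pack (R : realType) (g d : nat) (A : 'M[R]_(g, d)) b : ub (pack A b) = b.
Proof.
by apply/matrixP => i j; rewrite !mxE tnth_mktuple row_mxEr mxE (ord1 j).
Qed.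

Definition dot (R : realType) (g : nat) (u v : 'cV[R]_g) : R :=
  \sum_i u i ord0 * v i ord0.

Definition fab (R : realType) (g d k : nat) (phi : 'I_k -> 'cV[R]_d) (a c : 'I_k)
  (y : (g * d + g).-tuple R) : R :=
  dot (uA y *m phi a - ub y) (uA y *m phi c - ub y).

Lemma fab_pack (R : realType) (g d k : nat) (phi : 'I_k -> 'cV[R]_d) a c (A : 'M[R]_(g, d)) (b : 'cV[R]_g) :
  fab phi a c (pack A b) = dot (A *m phi a - b) (A *m phi c - b).
Proof. by rewrite /fab uA_pack ub_pack. Qed.

Lemma measurable_fab (R : realType) (g d k : nat) (phi : 'I_k -> 'cV[R]_d) a c :
  measurable_fun setT (@fab R g d k phi a c).
Proof.
have -> : @fab R g d k phi a c = fun y => \sum_(i < g)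
   ((\sum_(l < d) tnth y (lshift g (mxvec_index i l)) * phi a l ord0)
      - tnth y (rshift (g * d) i)) *
   ((\sum_(l < d) tnth y (lshift g (mxvec_index i l)) * phi c l ord0)
      - tnth y (rshift (g * d) i)).
  apply/funext => y; rewrite /fab /dot; apply: eq_bigr => i _.
  by rewrite !mxE; congr (( _ - _) * (_ - _)); apply: eq_bigr => l _; rewrite mxE.
apply: measurable_sum => i.
apply: measurable_realfun.measurable_funM; apply: measurable_realfun.measurable_funB;
  try exact: measurable_tnth.
all: apply: measurable_sum => l; apply: measurable_realfun.measurable_funM;
  [exact: measurable_tnth | exact: measurable_cst].
Qed.

Lemma sq_lin (R : realType) (g k : nat) (w : 'I_k -> R) (u : 'I_k -> 'cV[R]_g) :
  sqnorm2 (\sum_a w a *: u a) = \sum_a \sum_c w a * w c * dot (u a) (u c).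
Proof.
rewrite /sqnorm2 /dot.
have -> : \sum_(i < g) (\sum_a w a *: u a) i ord0 ^+ 2 =
   \sum_(i < g) \sum_a \sum_c w a * w c * (u a i ord0 * u c i ord0).
  apply: eq_bigr => i _; rewrite summxE expr2 mulr_suml; apply: eq_bigr => a _.
  rewrite mulr_sumr; apply: eq_bigr => c _; rewrite !mxE; ring.
rewrite exchange_big; apply: eq_bigr => a _.
rewrite exchange_big; apply: eq_bigr => c _.
by rewrite mulr_sumr.
Qed.

Lemma comb_expand (R : realType) (g d k : nat) (phi : 'I_k -> 'cV[R]_d)
  (w : 'I_k -> R) (A : 'M[R]_(g, d)) (b : 'cV[R]_g) :
  \sum_a w a = 1 ->
  sqnorm2 (A *m phi_comb phi w - b) =
  \sum_a \sum_c w a * w c * dot (A *m phi a - b) (A *m phi c - b).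
Proof.
move=> w1; rewrite -sq_lin; congr sqnorm2.
rewrite /phi_comb mulmx_sumr.
rewrite [X in _ - X = _](_ : b = \sum_a w a *: b); last first.
  by rewrite -scaler_suml w1 scale1r.
rewrite -sumrB; apply: eq_bigr => a _.
by rewrite scalerBr scalemxAr.
Qed.

Lemma dot_bound (R : realType) (g : nat) (u v : 'cV[R]_g) :
  `|dot u v| <= (sqnorm2 u + sqnorm2 v) / 2.
Proof.
rewrite /dot /sqnorm2; apply: le_trans (ler_norm_sum _ _ _) _.
rewrite -big_split /= mulr_suml; apply: ler_sum => i _.
set x := u i ord0; set y := v i ord0.
have h1 := sqr_ge0 (x - y); have h2 := sqr_ge0 (x + y).
rewrite !expr2 in h1 h2 *.
case: (lerP 0 (x * y)) => h; [rewrite ger0_norm // | rewrite ltr0_norm //]; nra.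
Qed.

Lemma simplex_sq (R : realType) (k : nat) (w : 'I_k -> R) : simplex w ->
  \sum_a \sum_c w a * w c = 1.
Proof.
case=> _ w1; under eq_bigr do rewrite -mulr_sumr w1 mulr1.
exact: w1.
Qed.

Lemma quad_le (R : realType) (k : nat) (w : 'I_k -> R) (M N : 'I_k -> 'I_k -> R) (e : R) :
  simplex w -> (forall a c, M a c <= N a c + e) ->
  \sum_a \sum_c w a * w c * M a c <= \sum_a \sum_c w a * w c * N a c + e.
Proof.
move=> sw hMN; have [w0 _] := sw.
rewrite -[X in _ + X]mul1r -(simplex_sq sw) mulr_suml -big_split /=.
apply: ler_sum => a _; rewrite mulr_suml -big_split /=; apply: ler_sum => c _.
by rewrite -mulrDr ler_wpM2l // mulr_ge0.
Qed.

Unset Implicit Arguments.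

Theorem theorem4p3 (R : realType) (c1 c2 : R) :
  exists C : R, 0 < C /\
  forall (k d g m : nat) (phi : 'I_k -> 'cV[R]_d)
    (disp : measure_display) (T : measurableType disp) (P : probability T R)
    (G1 : T -> 'M[R]_(g, d)) (G2 : T -> 'cV[R]_g)
    (S1 : 'I_m -> T -> 'M[R]_(g, d)) (S2 : 'I_m -> T -> 'cV[R]_g)
    (what : T -> ('I_k -> R)) (delta : R),
  (0 < k)%N ->
  (0 < m)%N ->
  (forall i a, 0 <= phi i a ord0 <= 1) ->
  (* (gamma1, gamma2) and the samples are random elements *)
  measurable_fun setT (fun x => pack (G1 x) (G2 x)) ->
  (forall j, measurable_fun setT (fun x => pack (S1 j x) (S2 j x))) ->
  (* bounds for all realizations *)
  (forall x, mx_l1 (G1 x) <= c1) ->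
  (forall x i, sqnorm2 (G1 x *m phi i - G2 x) <= c2) ->
  (forall j x, mx_l1 (S1 j x) <= c1) ->
  (forall j x i, sqnorm2 (S1 j x *m phi i - S2 j x) <= c2) ->
  (* the samples are i.i.d. with the law of (gamma1, gamma2) *)
  (forall j, same_law P (fun x => pack (S1 j x) (S2 j x))
                        (fun x => pack (G1 x) (G2 x))) ->
  mutually_independent P (fun j x => pack (S1 j x) (S2 j x)) ->
  (* what is an empirical risk minimizer over the simplex *)
  (forall x, simplex (what x)) ->
  (forall x w, simplex w ->
     emp_risk (fun j => S1 j x) (fun j => S2 j x) (phi_comb phi (what x))
     <= emp_risk (fun j => S1 j x) (fun j => S2 j x) (phi_comb phi w)) ->
  0 < delta < 1 ->
  exists E : set T, measurable E /\ ((1 - delta)%:E <= P E)%E /\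
    forall x, E x -> forall w, simplex w ->
      genL2 P G1 G2 (phi_comb phi (what x)) - genL2 P G1 G2 (phi_comb phi w)
      <= C * Num.sqrt (4 * ln (16 * k%:R / delta) / m%:R).
Proof.
have B0 : 0 < `|c2| + 1 by rewrite ltr_pwDr // normr_ge0.
have c2B : c2 <= `|c2| + 1 by have := ler_norm c2; lra.
exists (16 * (`|c2| + 1)); split; first by rewrite mulr_gt0.
move=> k d g m phi disp T P G1 G2 S1 S2 what delta k0 m0 hphi mG mS hG1 hG2 hS1 hS2
  law ind hwhat herm /andP[dl0 dl1].
move: B0 c2B; set B := `|c2| + 1 => B0 c2B.
pose Y0 x := pack (G1 x) (G2 x).
pose Y j x := pack (S1 j x) (S2 j x).
pose M a c := \int[P]_x fab phi a c (Y0 x).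
pose Mh a c x := m%:R^-1 * \sum_j fab phi a c (Y j x).
have hfb0 a c x : `|fab phi a c (Y0 x)| <= B.
  rewrite /Y0 fab_pack; apply: le_trans (dot_bound _ _) _.
  have := hG2 x a; have := hG2 x c; lra.
have hfb j a c x : `|fab phi a c (Y j x)| <= B.
  rewrite /Y fab_pack; apply: le_trans (dot_bound _ _) _.
  have := hS2 j x a; have := hS2 j x c; lra.
have mf0 a c : measurable_fun setT (fun x => fab phi a c (Y0 x)).
  exact: measurableT_comp (measurable_fab _ _ _) mG.
have intf a c : P.-integrable setT (EFin \o (fun x => fab phi a c (Y0 x))).
  exact: (@bnd_int _ _ _ P _ B (mf0 a c) (hfb0 a c)).
have hQ w : simplex w ->
    genL2 P G1 G2 (phi_comb phi w) = \sum_a \sum_c w a * w c * M a c.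
  move=> [_ w1].
  have -> : genL2 P G1 G2 (phi_comb phi w) =
      \int[P]_x sqnorm2 (G1 x *m phi_comb phi w - G2 x) by [].
  rewrite (eq_Rintegral P (g := fun x => \sum_(p : 'I_k * 'I_k)
      (w p.1 * w p.2) * fab phi p.1 p.2 (Y0 x))); last first.
    move=> x _; rewrite comb_expand // pair_bigA /=.
    by apply: eq_bigr => p _; rewrite /Y0 fab_pack.
  rewrite Rint_lin; last by move=> p; exact: intf.
  by rewrite pair_bigA.
have hQh x w : simplex w ->
    emp_risk (fun j => S1 j x) (fun j => S2 j x) (phi_comb phi w) =
    \sum_a \sum_c w a * w c * Mh a c x.
  move=> [_ w1]; rewrite /emp_risk /Mh.
  under eq_bigr do rewrite comb_expand //.
  rewrite mulr_sumr; under eq_bigr do rewrite mulr_sumr.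
  rewrite exchange_big /=; apply: eq_bigr => a _.
  under eq_bigr do rewrite mulr_sumr.
  rewrite exchange_big /=; apply: eq_bigr => c _.
  rewrite !mulr_sumr; apply: eq_bigr => j _.
  by rewrite /Y fab_pack; ring.
have hMB a c : `|M a c| <= B.
  have := hfb0 a c => hb.
  rewrite ler_norml; apply/andP; split.
    rewrite -[X in X <= _](@Rint_const _ _ _ P (- B)); apply: le_Rintegral => //.
    - exact: int_const.
    - by move=> x _; have := hb x; rewrite ler_norml => /andP[].
  rewrite -[X in _ <= X](@Rint_const _ _ _ P B); apply: le_Rintegral => //.
  - exact: int_const.
  - by move=> x _; have := hb x; rewrite ler_norml => /andP[].
set rt := Num.sqrt _.
have [big|small] := ltrP (1 / 4) rt.
  exists setT; split => //; split.
    have P1 : P setT = 1%E := probability_setT P.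
    by rewrite P1 lee_fin; lra.
  move=> x _ w sw; rewrite !hQ //.
  have h1 : \sum_a \sum_c what x a * what x c * M a c <=
      \sum_a \sum_c what x a * what x c * (fun _ _ => 0) a c + B.
    apply: quad_le => // a c; have := hMB a c; rewrite ler_norml => /andP[? ?]; lra.
  have h2 : \sum_a \sum_c w a * w c * (fun _ _ => 0) a c <=
      \sum_a \sum_c w a * w c * M a c + B.
    apply: quad_le => // a c; have := hMB a c; rewrite ler_norml => /andP[? ?]; lra.
  have z0 (v : 'I_k -> R) : \sum_a \sum_c v a * v c * (fun _ _ => (0 : R)) a c = 0.
    by rewrite big1 // => a _; rewrite big1 // => c _; rewrite /= mulr0.
  rewrite z0 in h1; rewrite z0 in h2.
  have : B * (1 / 4) < B * rt by rewrite ltr_pM2l.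
  lra.
set Lg := ln _ in rt small *.
have k1 : (1 : R) <= k%:R by rewrite ler1n.
have hq : 1 < 16 * k%:R / delta.
  rewrite ltr_pdivlMr //; nra.
have Lg0 : 0 < Lg by rewrite /Lg ln_gt0.
have m0' : (0 : R) < m%:R by rewrite ltr0n.
have rt0 : 0 < rt by rewrite /rt sqrtr_gt0 divr_gt0 // mulr_gt0.
have rt2 : rt ^+ 2 = 4 * Lg / m%:R.
  by rewrite /rt sqr_sqrtr // ltW // divr_gt0 // mulr_gt0.
pose t := 8 * B * rt.
have t0 : 0 < t by rewrite /t !mulr_gt0.
have tB : t <= 2 * B by rewrite /t; nra.
pose sg (b : bool) : R := if b then 1 else -1.
have sg2 b : `|sg b| = 1 by case: b; rewrite /sg ?normrN normr1.
pose hs (p : 'I_k * 'I_k * bool) (y : (g * d + g).-tuple R) := sg p.2 * fab phi p.1.1 p.1.2 y.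
pose Dp p := setT `&` (fun x => m%:R^-1 * \sum_j hs p (Y j x)) @^-1`
   `]\int[P]_x hs p (Y0 x) + t, +oo[.
pose eps := expR (- (m%:R * t ^+ 2 / (128 * B ^+ 2))).
have hDp p : fine (P (Dp p)) <= eps.
  apply: (@tail_bound _ _ _ P _ _ m Y Y0 (hs p) B) => //.
  - apply: measurable_realfun.measurable_funM; first exact: measurable_cst.
    exact: measurable_fab.
  - by move=> j x; rewrite /hs normrM sg2 mul1r.
  - by move=> x; rewrite /hs normrM sg2 mul1r.
have mMh a c : measurable_fun setT (Mh a c).
  apply: measurable_realfun.measurable_funM; first exact: measurable_cst.
  apply: measurable_sum => j; exact: measurableT_comp (measurable_fab _ _ _) (mS j).
have mDp p : measurable (Dp p).
  apply: measurable_realfun.measurable_funM; first exact: measurable_cst.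
  - apply: measurable_sum => j; apply: measurableT_comp (mS j).
    apply: measurable_realfun.measurable_funM; first exact: measurable_cst.
    exact: measurable_fab.
  - by [].
  - exact: measurable_itv.
pose E := \bigcap_(p in [set: 'I_k * 'I_k])
   (setT `&` (Mh p.1 p.2) @^-1` `[M p.1 p.2 - t, M p.1 p.2 + t]).
have mE : measurable E.
  apply: fin_bigcap_measurable; first exact: finite_finset.
  by move=> p _; apply: mMh => //; exact: measurable_itv.
have intMs b a c : \int[P]_x (sg b * fab phi a c (Y0 x)) = sg b * M a c.
  by rewrite RintegralZl.
have Dp_eq p x : Dp p x -> sg p.2 * M p.1.1 p.1.2 + t < sg p.2 * Mh p.1.1 p.1.2 x.
  case=> _ /=; rewrite /hs intMs in_itv /= andbT /Mh.
  by rewrite -mulr_sumr mulrCA.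
have Dp_eq' p x : sg p.2 * M p.1.1 p.1.2 + t < sg p.2 * Mh p.1.1 p.1.2 x -> Dp p x.
  move=> h; split => //=; rewrite /hs intMs in_itv /= andbT.
  by move: h; rewrite /Mh -mulr_sumr mulrCA.
have cover x : (~` E) x -> exists2 p : 'I_k * 'I_k * bool, p \in index_enum _ & Dp p x.
  move=> nE.
  have [p hp] : exists p : 'I_k * 'I_k, ~ (Mh p.1 p.2 x \in `[M p.1 p.2 - t, M p.1 p.2 + t]).
    apply: contrapT => hne; apply: nE => p _; split => //=.
    apply: contrapT => hp; apply: hne; by exists p.
  move: hp; rewrite in_itv /= => /negP; rewrite negb_and -!ltNge => /orP[h|h].
    exists (p, false); first by rewrite mem_index_enum.
    by apply: Dp_eq' => /=; rewrite /sg; lra.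
  exists (p, true); first by rewrite mem_index_enum.
  by apply: Dp_eq' => /=; rewrite /sg; lra.
have hcE : fine (P (~` E)) <= delta.
  apply: le_trans (@union_bound _ _ _ P _ _ Dp _ (measurableC mE) mDp cover) _.
  apply: le_trans (_ : \sum_(p : 'I_k * 'I_k * bool) eps <= _).
    by apply: ler_sum => p _; exact: hDp.
  rewrite sumr_const card_prod card_prod !card_ord card_bool.
  have Bn0 : B != 0 by rewrite gt_eqF.
  have mn0 : m%:R != 0 :> R by rewrite gt_eqF.
  have kn0 : k%:R != 0 :> R by rewrite gt_eqF //; lra.
  have dn0 : delta != 0 by rewrite gt_eqF.
  have e2 : m%:R * t ^+ 2 / (128 * B ^+ 2) = 2%:R * Lg.
    by rewrite /t !exprMn rt2; field; rewrite Bn0 mn0.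
  have eL : expR Lg = 16 * k%:R / delta.
    by rewrite lnK // posrE; lra.
  have epsE : eps = (delta / (16 * k%:R)) ^+ 2.
    by rewrite /eps e2 expRN expRM_natl eL -exprVn invf_div.
  rewrite epsE -(mulr_natr ((delta / (16 * k%:R)) ^+ 2)) !natrM.
  have -> : (delta / (16 * k%:R)) ^+ 2 * (k%:R * k%:R * 2%:R) = delta ^+ 2 / 128.
    by field.
  rewrite expr2; nra.
exists E; split => //; split.
  have hc := probability_setC P mE.
  rewrite (@Pfin _ _ _ P E mE) in hc *.
  rewrite (@Pfin _ _ _ P (~` E) (measurableC mE)) -EFinB in hc.
  move: hc => [hc]; rewrite lee_fin; lra.
move=> x Ex w sw.
have hx a c : M a c - t <= Mh a c x <= M a c + t.
  by have [_ /=] := Ex (a, c) I; rewrite in_itv.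
rewrite !hQ //; have := herm x w sw; rewrite !hQh // => hle.
have h1 := @quad_le _ _ (what x) M (fun a c => Mh a c x) t (hwhat x).
have h2 := @quad_le _ _ w (fun a c => Mh a c x) M t sw.
have : \sum_a \sum_c what x a * what x c * M a c <=
    \sum_a \sum_c what x a * what x c * Mh a c x + t.
  by apply: h1 => a c; have /andP[? ?] := hx a c; lra.
have : \sum_a \sum_c w a * w c * Mh a c x <= \sum_a \sum_c w a * w c * M a c + t.
  by apply: h2 => a c; have /andP[? ?] := hx a c; lra.
rewrite /t; lra.
Qed.
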